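(* Let $M \in \{0,1\}^{n \times n}$ be a binary matrix given together with a rectangle-decomposition $\mathcal{R}$ of $M$. Then for an arbitrary column vector $v \in \mathbb{R}^n$, the products $Mv$ and $v^\intercal M$ can be computed in time $\mathcal{O}(n + |\mathcal{R}|)$.
   Context: Running times assume unit-cost arithmetic operations on scalars. A $1$-rectangle of $M$ is a contiguous submatrix (a set $[a,b]\times[c,d]$ of positions, i.e. the intersection of a set of consecutive rows and a set of consecutive columns) all of whose entries are $1$. A rectangle-decomposition of $M$ is a collection of pairwise disjoint $1$-rectangles whose union is exactly the set of positions of $1$-entries of $M$; each rectangle is given by its four integer coordinates $a\le b$, $c\le d$. *)

(* Defs.v *)
From mathcomp Require Import all_boot all_algebra.
From mathcomp Require Import reals.
Set Implicit Arguments. Unset Strict Implicit. Unset Printing Implicit Defensive.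
Import GRing.Theory Num.Theory.
Local Open Scope ring_scope.

(* A rectangle Rect a b c d denotes the positions [a,b] x [c,d]:       *)
(* rows a..b, columns c..d.                                            *)
Record rect := Rect { ra : nat; rb : nat; rc : nat; rd : nat }.

Definition rect0 := Rect 0 0 0 0.

Definition in_rect (r : rect) (i j : nat) : bool :=
  [&& (ra r <= i)%N, (i <= rb r)%N, (rc r <= j)%N & (j <= rd r)%N].

Definition is_rect_decomp (n : nat) (M : 'M[bool]_n) (rs : seq rect) : Prop :=
  (forall k, (k < size rs)%N ->
     let r := nth rect0 rs k in
     [&& (ra r <= rb r)%N, (rb r < n)%N, (rc r <= rd r)%N & (rd r < n)%N])
  /\ (forall k, (k < size rs)%N -> forall i j : 'I_n,
        in_rect (nth rect0 rs k) i j -> M i j)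
  /\ (forall k l, (k < l)%N -> (l < size rs)%N -> forall i j : nat,
        ~~ (in_rect (nth rect0 rs k) i j && in_rect (nth rect0 rs l) i j))
  /\ (forall i j : 'I_n, M i j ->
        exists2 k, (k < size rs)%N & in_rect (nth rect0 rs k) i j).

Definition mx01 (R : realType) (n : nat) (M : 'M[bool]_n) : 'M[R]_n :=
  map_mx (fun b : bool => (b%:R : R)) M.

(* Computational model: a real RAM with unit-cost operations.         *)
(* Two memories: a nat-valued one (indices, input coordinates) and a  *)
(* real-valued one.  Direct addresses are program constants; arrays   *)
(* are accessed by indirect addressing through nat cells.             *)
Inductive instr :=
| Halt
| NCst  (d k : nat)
| NAdd  (d x y : nat)
| NSub  (d x y : nat)      (* N[d] := N[x] - N[y]  (truncated) *)
| NLoad (d x : nat)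
| NStore (x y : nat)
| RZero (d : nat)
| RAdd  (d x y : nat)
| RSub  (d x y : nat)
| RMul  (d x y : nat)
| RLoad (d x : nat)
| RStore (x y : nat)
| JmpLe (x y t : nat).

Definition program := seq instr.

Record config (R : Type) := Cfg { pc : nat; nmem : nat -> nat; rmem : nat -> R }.

Definition upd {T : Type} (f : nat -> T) (a : nat) (v : T) : nat -> T :=
  fun b => if b == a then v else f b.

(* one step; None means the machine has halted (Halt or pc out of range) *)
Definition step (R : realType) (P : program) (c : config R) : option (config R) :=
  let p := pc c in let N := nmem c in let X := rmem c in
  match nth Halt P p with
  | Halt => None
  | NCst d k => Some (Cfg p.+1 (upd N d k) X)
  | NAdd d x y => Some (Cfg p.+1 (upd N d (N x + N y)%N) X)
  | NSub d x y => Some (Cfg p.+1 (upd N d (N x - N y)%N) X)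
  | NLoad d x => Some (Cfg p.+1 (upd N d (N (N x))) X)
  | NStore x y => Some (Cfg p.+1 (upd N (N x) (N y)) X)
  | RZero d => Some (Cfg p.+1 N (upd X d 0))
  | RAdd d x y => Some (Cfg p.+1 N (upd X d (X x + X y)))
  | RSub d x y => Some (Cfg p.+1 N (upd X d (X x - X y)))
  | RMul d x y => Some (Cfg p.+1 N (upd X d (X x * X y)))
  | RLoad d x => Some (Cfg p.+1 N (upd X d (X (N x))))
  | RStore x y => Some (Cfg p.+1 N (upd X (N x) (X y)))
  | JmpLe x y t => Some (Cfg (if (N x <= N y)%N then t else p.+1) N X)
  end.

(* run P t c = Some c' iff the machine started in c halts in configuration
   c' after executing at most t instructions. *)
Fixpoint run (R : realType) (P : program) (t : nat) (c : config R)
  : option (config R) :=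
  match step P c with
  | None => Some c
  | Some c' => if t is t'.+1 then run P t' c' else None
  end.

(* Input encoding: N[0] = n, N[1] = |R|, N[2+4k..2+4k+3] = (a,b,c,d) of the
   k-th rectangle, all other nat cells 0; Re[j] = v_j for j < n, other real
   cells 0; execution starts at pc = 0. *)
Definition nat_input (n : nat) (rs : seq rect) : nat -> nat :=
  fun m =>
    if m == 0%N then n
    else if m == 1%N then size rs
    else let k := ((m - 2) %/ 4)%N in
         if (k < size rs)%N then
           let r := nth rect0 rs k in
           match ((m - 2) %% 4)%N with
           | 0 => ra r | 1 => rb r | 2 => rc r | _ => rd r end
         else 0%N.

Definition real_input (R : realType) (n : nat) (v : 'I_n -> R) : nat -> R :=
  fun m => if (insub m : option 'I_n) is Some i then v i else 0.

Definition init (R : realType) (n : nat) (rs : seq rect) (v : 'I_n -> R)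
  : config R := Cfg 0 (nat_input n rs) (real_input v).

(* Output convention: after halting, Re[j] holds the j-th output entry. *)

(* Main.v *)
Require Import Defs.
From mathcomp Require Import all_boot all_algebra.
From mathcomp Require Import reals.
From mathcomp Require Import zify.
From mathcomp.algebra_tactics Require Import ring lra.
Set Implicit Arguments. Unset Strict Implicit. Unset Printing Implicit Defensive.
Import GRing.Theory Num.Theory.
Local Open Scope ring_scope.

Fixpoint steps (R : realType) (P : program) (k : nat) (c : config R) : option (config R) :=
  if k is k'.+1 then (if step P c is Some c' then steps P k' c' else None) else Some c.

Lemma stepsS (R : realType) P k (c : config R) :
  steps P k.+1 c = (if step P c is Some c' then steps P k c' else None).
Proof. by []. Qed.

Lemma steps_add (R : realType) P k1 k2 (c c1 : config R) :
  steps P k1 c = Some c1 -> steps P (k1 + k2) c = steps P k2 c1.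
Proof.
elim: k1 c => [|k IH] c /=; first by case=> ->.
by case: (step P c) => // c' /IH.
Qed.

Lemma run_of_steps (R : realType) P k (c c' : config R) t :
  steps P k c = Some c' -> step P c' = None -> (k <= t)%N -> run P t c = Some c'.
Proof.
elim: k c t => [|k IH] c t /=.
  by case=> -> Hs _; case: t => [|t] /=; rewrite Hs.
case E: (step P c) => [c1|] // Hs Hn.
case: t => [|t] //= Hk.
by rewrite E; apply: IH.
Qed.

Lemma loop_lemma (R : realType) P (Inv : nat -> config R -> Prop) (L lo hi : nat) :
  (forall i c, (lo <= i < hi)%N -> Inv i c -> exists c', steps P L c = Some c' /\ Inv i.+1 c') ->
  forall c, Inv lo c -> (lo <= hi)%N -> exists c', steps P (L * (hi - lo)) c = Some c' /\ Inv hi c'.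
Proof.
move=> Hb c Hc Hle.
have: forall d, (d <= hi - lo)%N -> exists c', steps P (L * d) c = Some c' /\ Inv (lo + d)%N c'.
  elim=> [|d IH] Hd; first by exists c; rewrite muln0 addn0.
  have [c1 [H1 I1]] := IH (ltnW Hd).
  have [c2 [H2 I2]] : exists c2, steps P L c1 = Some c2 /\ Inv (lo + d).+1 c2.
    by apply: Hb => //; apply/andP; split; lia.
  exists c2; split; last by rewrite addnS.
  by rewrite mulnS addnC (steps_add _ H1).
move/(_ (hi - lo)%N (leqnn _)) => [c' [H1 H2]]; exists c'; split => //.
by rewrite subnKC in H2.
Qed.
Definition prog (s1 s2 u1 u2 : nat) : program := [::
  JmpLe 0 2 99;
  NAdd 1 1 0;
  NAdd 1 1 0;
  NAdd 1 1 0;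
  NAdd 1 1 1;
  NAdd 1 1 1;
  NStore 1 0;
  NCst 0 2;
  NAdd 0 0 1;
  NStore 0 2;
  NCst 0 3;
  NAdd 0 0 1;
  NStore 0 3;
  NCst 2 4;
  NCst 0 4;
  NAdd 3 1 0;
  (* 16 *) JmpLe 1 2 23;
  NLoad 0 2;
  NStore 3 0;
  NCst 0 1;
  NAdd 2 2 0;
  NAdd 3 3 0;
  JmpLe 0 0 16;
  (* 23 *) NLoad 9 1;
  NAdd 4 9 9;
  NAdd 4 4 4;
  NAdd 5 4 4;
  NAdd 4 4 5;
  NSub 4 1 4;
  NCst 0 2;
  NAdd 4 4 0;
  NAdd 4 4 1;
  NAdd 5 9 0;
  NCst 0 3;
  NAdd 6 9 0;
  NAdd 7 9 9;
  NAdd 7 7 0;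
  NCst 0 1;
  NAdd 8 7 0;
  NCst 0 0;
  NAdd 10 6 0;
  RStore 10 0;
  NCst 3 1;
  (* 43 *) JmpLe 9 3 51;
  RLoad 1 3;
  RAdd 0 0 1;
  NCst 0 1;
  NAdd 10 10 0;
  RStore 10 0;
  NAdd 3 3 0;
  JmpLe 0 0 43;
  (* 51 *) NCst 0 2;
  NAdd 3 1 0;
  (* 53 *) JmpLe 4 3 82;
  NCst 0 s2;
  NAdd 0 3 0;
  NLoad 0 0;
  NAdd 0 0 6;
  RLoad 0 0;
  NCst 0 s1;
  NAdd 0 3 0;
  NLoad 0 0;
  NAdd 0 0 5;
  RLoad 1 0;
  RSub 0 0 1;
  NCst 0 u1;
  NAdd 0 3 0;
  NLoad 0 0;
  NAdd 0 0 7;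
  RLoad 1 0;
  RAdd 1 1 0;
  RStore 0 1;
  NCst 0 u2;
  NAdd 0 3 0;
  NLoad 0 0;
  NAdd 0 0 8;
  RLoad 1 0;
  RSub 1 1 0;
  RStore 0 1;
  NCst 0 4;
  NAdd 3 3 0;
  JmpLe 0 0 53;
  (* 82 *) NCst 3 1;
  NCst 0 0;
  NAdd 10 8 0;
  NAdd 11 7 0;
  (* 86 *) JmpLe 9 3 97;
  RLoad 0 11;
  RLoad 1 10;
  RAdd 0 0 1;
  RStore 10 0;
  RStore 3 0;
  NCst 0 1;
  NAdd 3 3 0;
  NAdd 10 10 0;
  NAdd 11 11 0;
  JmpLe 0 0 86;
  (* 97 *) RLoad 1 8;
  RLoad 0 7;
  (* 99 *) Halt
].

Arguments upd {T} f a v b /.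
Arguments steps : simpl never.
Ltac st := rewrite stepsS /step /=.

Ltac dec_eq := repeat match goal with
  | |- context [(?a == ?b :> nat)] =>
      first [ rewrite (_ : (a == b) = false); last (apply/eqP; lia)
            | rewrite (_ : (a == b) = true); last (apply/eqP; lia) ]
  end.

Ltac ucase := repeat (case: eqP => ?; try (exfalso; lia)); try done.

Definition Bv n m := (4 * m + 12 * n)%N.
Definition Ev m := (4 * m + 2)%N.

Definition CopyInv (R : realType) (X0 : nat -> R) (N0 : nat -> nat) (n B : nat) (A : nat) (c : config R) :=
  [/\ pc c = 16%N, rmem c = X0, [/\ nmem c 1 = B, nmem c 2 = A, nmem c 3 = B + A & nmem c B = n]%N,
      (forall a, 2 <= a -> a < A -> nmem c (B + a) = N0 a)%N &
      (forall a, A <= a < B -> nmem c a = N0 a)%N].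

Lemma seg1 (R : realType) s1 s2 u1 u2 (N0 : nat -> nat) (X0 : nat -> R) n m :
  (0 < n)%N -> N0 0%N = n -> N0 1%N = m -> (N0 2 < n)%N ->
  exists c, steps (prog s1 s2 u1 u2) 16 (Cfg 0 N0 X0) = Some c /\ CopyInv X0 N0 n (Bv n m) 4 c.
Proof.
move=> Hn H0 H1 H2.
st. rewrite H0 leqNgt H2 /=.
do 15 st.
rewrite /steps.
eexists; split; first reflexivity.
rewrite H0 H1 /Bv; split => /=; dec_eq => //.
- by split; dec_eq; lia.
- move=> a Ha1 Ha2; dec_eq; ucase; (try by congr N0; lia).
- move=> a /andP[Ha1 Ha2]; dec_eq; ucase; (try by congr N0; lia).
Qed.

Lemma copy_body (R : realType) s1 s2 u1 u2 X0 N0 n B A (c : config R) :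
  (4 <= A < B)%N -> CopyInv X0 N0 n B A c ->
  exists c', steps (prog s1 s2 u1 u2) 7 c = Some c' /\ CopyInv X0 N0 n B A.+1 c'.
Proof.
case: c => p N X /andP[HA1 HA2] [/= Hp HX [H1 H2 H3 HB] HS HR]; subst p X.
st. rewrite H1 H2 leqNgt HA2 /=.
do 6 st. rewrite /steps.
eexists; split; first reflexivity.
rewrite H2 H3; split => //=; dec_eq.
- by split; dec_eq; rewrite ?HB //; lia.
- move=> a Ha1 Ha2; dec_eq; ucase.
  + have -> : a = A by lia.
    by rewrite HR // leqnn.
  + by apply: HS => //; lia.
- move=> a /andP[Ha1 Ha2]; dec_eq; ucase.
  by apply: HR; lia.
Qed.

Lemma copy_exit (R : realType) s1 s2 u1 u2 X0 N0 n B (c : config R) :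
  CopyInv X0 N0 n B B c ->
  steps (prog s1 s2 u1 u2) 1 c = Some (Cfg 23 (nmem c) X0).
Proof.
case: c => p N X [/= Hp HX [H1 H2 H3 HB] HS HR]; subst p X.
st. by rewrite H1 H2 leqnn.
Qed.

Definition Pf (R : realType) (X0 : nat -> R) (i : nat) := \sum_(0 <= k < i) X0 k.

Definition Regs n B E (N : nat -> nat) :=
  N 1%N = B /\ N 4%N = (B + E)%N /\ N 5%N = (n + 2)%N /\ N 6%N = (n + 3)%N /\
      N 7%N = (n + n + 3)%N /\ N 8%N = (n + n + 4)%N /\ N 9%N = n.

Definition Rd (N0 : nat -> nat) B E (N : nat -> nat) :=
  forall a, (2 <= a < E)%N -> N (B + a)%N = N0 a.

Definition PInv (R : realType) (X0 : nat -> R) N0 n B E (i : nat) (c : config R) :=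
  [/\ pc c = 43%N, Regs n B E (nmem c), Rd N0 B E (nmem c),
      nmem c 3 = i /\ nmem c 10 = (n + 2 + i)%N &
      [/\ rmem c 0 = Pf X0 i,
          forall k, (k <= i)%N -> rmem c (n + 2 + k)%N = Pf X0 k,
          forall k, (i <= k < n)%N -> rmem c k = X0 k &
          forall x, (x <= n)%N -> rmem c (n + n + 3 + x)%N = 0]].

Lemma seg2 (R : realType) s1 s2 u1 u2 (X0 : nat -> R) (N0 : nat -> nat) n m (N : nat -> nat) :
  (0 < n)%N -> (forall k, (n <= k)%N -> X0 k = 0) ->
  N 1%N = Bv n m -> N (Bv n m) = n ->
  (forall a, 2 <= a < Bv n m -> N (Bv n m + a) = N0 a)%N ->
  exists c, steps (prog s1 s2 u1 u2) 20 (Cfg 23 N X0) = Some c /\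
     PInv X0 N0 n (Bv n m) (Ev m) 1 c.
Proof.
move=> Hn HX0 H1 HB HS.
have HB12 : (12 * n <= Bv n m)%N by rewrite /Bv; lia.
have HEB : (Ev m + 12 * n = Bv n m + 2)%N by rewrite /Bv /Ev; lia.
do 20 st. rewrite /steps.
eexists; split; first reflexivity.
rewrite /PInv /Regs /Rd /= H1 HB; split => //.
- by repeat split; dec_eq; rewrite ?H1 /Bv /Ev; lia.
- move=> a Ha; dec_eq; rewrite HS //; rewrite /Ev /Bv in Ha *; lia.
- by split; dec_eq; lia.
split; dec_eq.
- by rewrite /Pf big_nat1.
- move=> k Hk; dec_eq; ucase.
  + have -> : k = 1%N by lia.
    by rewrite /Pf big_nat1.
  + have -> : k = 0%N by lia.
    by rewrite /Pf big_geq // HX0 //; lia.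
- move=> k Hk; dec_eq; ucase.
- move=> x Hx; dec_eq; ucase; apply: HX0; lia.
Qed.

Lemma PfS (R : realType) (X0 : nat -> R) j : Pf X0 j.+1 = Pf X0 j + X0 j.
Proof. by rewrite /Pf big_nat_recr. Qed.

Lemma p_body (R : realType) s1 s2 u1 u2 (X0 : nat -> R) N0 n B E i (c : config R) :
  (1 <= i < n)%N -> (12 <= B)%N -> PInv X0 N0 n B E i c ->
  exists c', steps (prog s1 s2 u1 u2) 8 c = Some c' /\ PInv X0 N0 n B E i.+1 c'.
Proof.
case: c => p N X /andP[Hi1 Hi2] HB12.
case=> /= Hp [H1 [H4 [H5 [H6 [H7 [H8 H9]]]]]] HRd [H3 H10] [HX HW HV HD]; subst p.
st. rewrite H9 H3 leqNgt Hi2 /=.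
do 7 st. rewrite /steps.
eexists; split; first reflexivity.
rewrite /PInv /Regs /Rd /= H3 H10; split.
- by [].
- by repeat split; dec_eq; rewrite ?H1 ?H4 ?H5 ?H6 ?H7 ?H8 ?H9.
- by move=> a Ha; dec_eq; apply: HRd.
- by split; dec_eq; lia.
split; dec_eq.
- by rewrite PfS HX HV //; lia.
- move=> k Hk; dec_eq; ucase.
  + have -> : k = i.+1 by lia.
    by rewrite PfS HX HV //; lia.
  + by apply: HW; lia.
- move=> k Hk; dec_eq; ucase; apply: HV; lia.
- move=> x Hx; dec_eq; ucase; apply: HD; lia.
Qed.

Lemma p_exit (R : realType) s1 s2 u1 u2 (X0 : nat -> R) N0 n B E (c : config R) :
  PInv X0 N0 n B E n c ->
  steps (prog s1 s2 u1 u2) 1 c = Some (Cfg 51 (nmem c) (rmem c)).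
Proof.
case: c => p N X.
case=> /= Hp [H1 [H4 [H5 [H6 [H7 [H8 H9]]]]]] HRd [H3 H10] _; subst p.
st. by rewrite H9 H3 leqnn.
Qed.

Definition F (N0 : nat -> nat) (j t : nat) := N0 (2 + 4 * j + t)%N.
Definition S (R : realType) (X0 : nat -> R) N0 s1 s2 (j : nat) :=
  Pf X0 (F N0 j s2).+1 - Pf X0 (F N0 j s1).
Definition Dk (R : realType) (X0 : nat -> R) N0 s1 s2 u1 u2 (k x : nat) :=
  \sum_(j < k) ((if F N0 j u1 == x then S X0 N0 s1 s2 j else 0) -
                (if (F N0 j u2).+1 == x then S X0 N0 s1 s2 j else 0)).

Definition RInv (R : realType) (X0 : nat -> R) N0 s1 s2 u1 u2 n B E (k : nat) (c : config R) :=
  [/\ pc c = 53%N, Regs n B E (nmem c), Rd N0 B E (nmem c),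
      nmem c 3 = (B + 2 + 4 * k)%N &
      (forall j, (j <= n)%N -> rmem c (n + 2 + j)%N = Pf X0 j) /\
      (forall x, (x <= n)%N -> rmem c (n + n + 3 + x)%N = Dk X0 N0 s1 s2 u1 u2 k x)].

Lemma seg3 (R : realType) s1 s2 u1 u2 (X0 : nat -> R) N0 n B E (c : config R) :
  (12 <= B)%N -> PInv X0 N0 n B E n c ->
  exists c', steps (prog s1 s2 u1 u2) 3 c = Some c' /\ RInv X0 N0 s1 s2 u1 u2 n B E 0 c'.
Proof.
case: c => p N X HB12.
case=> /= Hp [H1 [H4 [H5 [H6 [H7 [H8 H9]]]]]] HRd [H3 H10] [HX HW HV HD]; subst p.
st. rewrite H9 H3 leqnn /=.
do 2 st. rewrite /steps.
eexists; split; first reflexivity.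
rewrite /RInv /Regs /Rd /=; split.
- by [].
- by repeat split; dec_eq; rewrite ?H1 ?H4 ?H5 ?H6 ?H7 ?H8 ?H9.
- by move=> a Ha; dec_eq; apply: HRd.
- by rewrite H1; lia.
split => x Hx; first by apply: HW.
by rewrite HD // /Dk big_ord0.
Qed.

Lemma DkS (R : realType) (X0 : nat -> R) N0 s1 s2 u1 u2 k x :
  Dk X0 N0 s1 s2 u1 u2 k.+1 x = Dk X0 N0 s1 s2 u1 u2 k x +
    ((if F N0 k u1 == x then S X0 N0 s1 s2 k else 0) -
     (if (F N0 k u2).+1 == x then S X0 N0 s1 s2 k else 0)).
Proof. by rewrite /Dk big_ord_recr. Qed.

Lemma r_body (R : realType) s1 s2 u1 u2 (X0 : nat -> R) N0 n B E k (c : config R) :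
  (s1 < 4)%N -> (s2 < 4)%N -> (u1 < 4)%N -> (u2 < 4)%N ->
  (12 <= B)%N -> (2 + 4 * k + 3 < E)%N -> 
  (F N0 k s1 <= n)%N -> (F N0 k s2 < n)%N -> (F N0 k u1 <= F N0 k u2)%N -> (F N0 k u2 < n)%N ->
  RInv X0 N0 s1 s2 u1 u2 n B E k c ->
  exists c', steps (prog s1 s2 u1 u2) 29 c = Some c' /\ RInv X0 N0 s1 s2 u1 u2 n B E k.+1 c'.
Proof.
case: c => p N X Hs1 Hs2 Hu1 Hu2 HB12 HkE Hf1 Hf2 Hf3 Hf4.
case=> /= Hp [H1 [H4 [H5 [H6 [H7 [H8 H9]]]]]] HRd H3 [HW HD]; subst p.
have Hlt : (B + E <= B + 2 + 4 * k)%N = false by apply/negP => ?; lia.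
st. rewrite H4 H3 Hlt /=.
have FE : forall t, (t < 4)%N -> N (B + 2 + 4 * k + t)%N = F N0 k t.
  move=> t Ht; rewrite (_ : (B + 2 + 4 * k + t = B + (2 + 4 * k + t))%N); last by lia.
  by rewrite HRd //; lia.
do 28 (st; rewrite ?H3; dec_eq; rewrite ?FE //).
rewrite /steps.
eexists; split; first reflexivity.
rewrite /RInv /Regs /Rd /= ?H3.
dec_eq.
rewrite ?FE // ?H5 ?H6 ?H7 ?H8.
split.
- by [].
- by repeat split; rewrite ?H1 ?H4 ?H9.
- by move=> a Ha; dec_eq; apply: HRd.
- lia.
split => x Hx; dec_eq; first by apply: HW.
have SE : X (F N0 k s2 + (n + 3))%N - X (F N0 k s1 + (n + 2))%N = S X0 N0 s1 s2 k.
  rewrite (_ : (F N0 k s2 + (n + 3) = n + 2 + (F N0 k s2).+1)%N); last by lia.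
  rewrite (_ : (F N0 k s1 + (n + 2) = n + 2 + F N0 k s1)%N); last by lia.
  by rewrite !HW //; lia.
rewrite SE; ucase; rewrite DkS.
- have Ex : x = (F N0 k u2).+1 by lia.
  subst x.
  rewrite (_ : (F N0 k u2 + (n + n + 4) = n + n + 3 + (F N0 k u2).+1)%N); last by lia.
  rewrite HD // eqxx (_ : (F N0 k u1 == (F N0 k u2).+1) = false); last by apply/negbTE/eqP; lia.
  lra.
- have Ex : x = F N0 k u1 by lia.
  subst x.
  rewrite (_ : (F N0 k u1 + (n + n + 3) = n + n + 3 + F N0 k u1)%N); last by lia.
  rewrite HD // eqxx (_ : ((F N0 k u2).+1 == F N0 k u1) = false); last by apply/negbTE/eqP; lia.
  lra.
- rewrite HD //.
  rewrite (_ : (F N0 k u1 == x) = false); last by apply/negbTE/eqP; lia.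
  rewrite (_ : ((F N0 k u2).+1 == x) = false); last by apply/negbTE/eqP; lia.
  lra.
Qed.

Definition out (R : realType) (D : nat -> R) (x : nat) := \sum_(0 <= y < x.+1) D y.

Definition OInv (R : realType) (D : nat -> R) n (i : nat) (c : config R) :=
  [/\ pc c = 86%N,
      [/\ nmem c 3 = i, nmem c 7 = (n + n + 3)%N, nmem c 8 = (n + n + 4)%N & nmem c 9 = n] /\
      nmem c 10 = (n + n + 3 + i)%N /\ nmem c 11 = (n + n + 2 + i)%N,
      (forall x, (x < i)%N -> rmem c (n + n + 3 + x)%N = out D x),
      (forall x, (i <= x <= n)%N -> rmem c (n + n + 3 + x)%N = D x) &
      (forall x, (2 <= x < i)%N -> rmem c x = out D x)].

Lemma seg4 (R : realType) s1 s2 u1 u2 (X0 : nat -> R) N0 n B m (c : config R) :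
  RInv X0 N0 s1 s2 u1 u2 n B (Ev m) m c ->
  exists c', steps (prog s1 s2 u1 u2) 5 c = Some c' /\
    OInv (Dk X0 N0 s1 s2 u1 u2 m) n 1 c'.
Proof.
case: c => p N X.
case=> /= Hp [H1 [H4 [H5 [H6 [H7 [H8 H9]]]]]] HRd H3 [HW HD]; subst p.
st. rewrite H4 H3 (_ : (B + Ev m <= B + 2 + 4 * m)%N = true) /=; last by apply/idP; rewrite /Ev; lia.
do 4 st. rewrite /steps.
eexists; split; first reflexivity.
rewrite /OInv /=; split.
- by [].
- by rewrite H7 H8 H9; split; [split | split]; lia.
- move=> x Hx; have -> : x = 0%N by lia.
  by rewrite /out big_nat1 HD.
- by move=> x Hx; apply: HD; lia.
- move=> x Hx; lia.
Qed.

Lemma o_body (R : realType) s1 s2 u1 u2 (D : nat -> R) n i (c : config R) :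
  (1 <= i < n)%N -> OInv D n i c ->
  exists c', steps (prog s1 s2 u1 u2) 11 c = Some c' /\ OInv D n i.+1 c'.
Proof.
case: c => p N X /andP[Hi1 Hi2].
case=> /= Hp [[H3 H7 H8 H9] [H10 H11]] HO HD HR; subst p.
st. rewrite H9 H3 leqNgt Hi2 /=.
do 10 st. rewrite /steps.
eexists; split; first reflexivity.
rewrite /OInv /= ?H3 ?H10 ?H11; dec_eq.
have Hout : X (n + n + 2 + i)%N + X (n + n + 3 + i)%N = out D i.
  rewrite (_ : (n + n + 2 + i = n + n + 3 + i.-1)%N); last by lia.
  rewrite HO; last by lia.
  rewrite HD; last by lia.
  rewrite /out (_ : i = i.-1.+1) //; last by lia.
  by rewrite [in RHS]big_nat_recr //= -(_ : i = i.-1.+1) //; lia.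
split.
- by [].
- by rewrite H7 H8 H9; split; [split|split]; lia.
- move=> x Hx; dec_eq; ucase.
  + by have -> : x = i by lia.
  + by apply: HO; lia.
- by move=> x Hx; dec_eq; ucase; apply: HD; lia.
- move=> x Hx; dec_eq; ucase.
  + by subst x.
  + by apply: HR; lia.
Qed.

Lemma seg5 (R : realType) s1 s2 u1 u2 (D : nat -> R) n (c : config R) :
  (0 < n)%N -> OInv D n n c ->
  exists c', steps (prog s1 s2 u1 u2) 3 c = Some c' /\ step (prog s1 s2 u1 u2) c' = None /\
    forall j, (j < n)%N -> rmem c' j = out D j.
Proof.
case: c => p N X Hn.
case=> /= Hp [[H3 H7 H8 H9] [H10 H11]] HO HD HR; subst p.
st. rewrite H9 H3 leqnn /=.
do 2 st. rewrite /steps.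
eexists; split; first reflexivity.
split; first by [].
move=> j Hj /=; rewrite H7 H8.
case: j Hj => [|[|j]] Hj /=; dec_eq.
- by rewrite (_ : (n + n + 3 = n + n + 3 + 0)%N) ?HO //; lia.
- by rewrite (_ : (n + n + 4 = n + n + 3 + 1)%N) ?HO //; lia.
- by apply: HR; lia.
Qed.

Lemma steps_trans (R : realType) P k1 k2 (c c1 c2 : config R) :
  steps P k1 c = Some c1 -> steps P k2 c1 = Some c2 -> steps P (k1 + k2) c = Some c2.
Proof. by move=> H1 H2; rewrite (steps_add _ H1). Qed.

Theorem machine (R : realType) s1 s2 u1 u2 (N0 : nat -> nat) (X0 : nat -> R) n m :
  (s1 < 4)%N -> (s2 < 4)%N -> (u1 < 4)%N -> (u2 < 4)%N ->
  (0 < n)%N -> N0 0%N = n -> N0 1%N = m -> (N0 2 < n)%N ->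
  (forall k, (n <= k)%N -> X0 k = 0) ->
  (forall k, (k < m)%N -> [/\ (F N0 k s1 <= n)%N, (F N0 k s2 < n)%N,
                              (F N0 k u1 <= F N0 k u2)%N & (F N0 k u2 < n)%N]) ->
  exists c, run (prog s1 s2 u1 u2) (110 * (n + m) + 110)%N (Cfg 0 N0 X0) = Some c /\
    forall j, (j < n)%N -> rmem c j = out (Dk X0 N0 s1 s2 u1 u2 m) j.
Proof.
move=> Hs1 Hs2 Hu1 Hu2 Hn H0 H1 H2 HX0 HF.
set P := prog s1 s2 u1 u2.
have HB12 : (12 <= Bv n m)%N by rewrite /Bv; lia.
have [c1 [E1 I1]] := seg1 s1 s2 u1 u2 X0 Hn H0 H1 H2.
have [c2 [E2 I2]] := loop_lemma (@copy_body R s1 s2 u1 u2 X0 N0 n (Bv n m)) I1 (ltnW (leq_trans (isT : 4 < 12)%N HB12)).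
have E3 := copy_exit s1 s2 u1 u2 I2.
case: I2 => _ HX2 [H21 _ _ H2B] HS2 _.
have [c4 [E4 I4]] := @seg2 R s1 s2 u1 u2 X0 N0 n m _ Hn HX0 H21 H2B (fun a Ha => HS2 a (proj1 (andP Ha)) (proj2 (andP Ha))).
have [c5 [E5 I5]] := loop_lemma (fun i c Hi => @p_body R s1 s2 u1 u2 X0 N0 n (Bv n m) (Ev m) i c Hi HB12) I4 Hn.
have [c6 [E6 I6]] := seg3 s1 s2 u1 u2 HB12 I5.
have Hb : forall k c, (0 <= k < m)%N -> RInv X0 N0 s1 s2 u1 u2 n (Bv n m) (Ev m) k c ->
   exists c', steps P 29 c = Some c' /\ RInv X0 N0 s1 s2 u1 u2 n (Bv n m) (Ev m) k.+1 c'.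
  move=> k c /andP[_ Hk]; have [Hf1 Hf2 Hf3 Hf4] := HF k Hk.
  have HkE : (2 + 4 * k + 3 < Ev m)%N by rewrite /Ev; lia.
  exact: (@r_body R s1 s2 u1 u2 X0 N0 n (Bv n m) (Ev m) k c Hs1 Hs2 Hu1 Hu2 HB12 HkE Hf1 Hf2 Hf3 Hf4).
have [c7 [E7 I7]] := loop_lemma Hb I6 (leq0n m).
have [c8 [E8 I8]] := @seg4 R s1 s2 u1 u2 X0 N0 n (Bv n m) m c7 I7.
have [c9 [E9 I9]] := loop_lemma (fun i c Hi => @o_body R s1 s2 u1 u2 _ n i c Hi) I8 Hn.
have [c10 [E10 [H10 O10]]] := seg5 s1 s2 u1 u2 Hn I9.
exists c10; split; last exact: O10.
have T := steps_trans (steps_trans (steps_trans (steps_trans (steps_trans (steps_trans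
   (steps_trans (steps_trans (steps_trans E1 E2) E3) E4) E5) E6) E7) E8) E9) E10.
apply: (run_of_steps T H10).
rewrite /Bv; nia.
Qed.

Definition fld (r : rect) (t : nat) :=
  match t with 0 => ra r | 1 => rb r | 2 => rc r | _ => rd r end.

Lemma nat_input_F n rs k t : (t < 4)%N -> (k < size rs)%N ->
  nat_input n rs (2 + 4 * k + t) = fld (nth rect0 rs k) t.
Proof.
move=> Ht Hk; rewrite /nat_input.
rewrite (_ : (2 + 4 * k + t == 0)%N = false); last by apply/negbTE/eqP; lia.
rewrite (_ : (2 + 4 * k + t == 1)%N = false); last by apply/negbTE/eqP; lia.
have E : (2 + 4 * k + t - 2 = k * 4 + t)%N by lia.
rewrite E divnMDl // divn_small // addn0 Hk modnMDl modn_small //;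
  by case: t Ht => [|[|[|[|]]]].
Qed.

Lemma nat_input2 n rs : nat_input n rs 2 = if (0 < size rs)%N then ra (nth rect0 rs 0) else 0%N.
Proof. by rewrite /nat_input /= subnn div0n ?mod0n. Qed.

Lemma sum_if_eq (R : realType) (a N : nat) (s : R) :
  \sum_(0 <= y < N) (if a == y then s else 0) = if (a < N)%N then s else 0.
Proof.
elim: N => [|N IH]; first by rewrite big_geq.
rewrite big_nat_recr //= IH ltnS [in RHS]leq_eqVlt.
case: eqP => [->|_] /=; first by rewrite ltnn add0r.
by rewrite addr0.
Qed.

Lemma ite_combo (R : realType) a b j (s : R) : (a <= b)%N ->
  (if (a < j.+1)%N then s else 0) - (if (b.+1 < j.+1)%N then s else 0) =
  if ((a <= j) && (j <= b))%N then s else 0.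
Proof.
move=> Hab; rewrite !ltnS.
have [H1|H1] := boolP (a <= j)%N; have [H2|H2] := boolP (b.+1 <= j)%N;
  have [H3|H3] := boolP (j <= b)%N; rewrite /= ?subrr ?subr0 //; try lia.
Qed.

Lemma out_formula (R : realType) (X0 : nat -> R) N0 s1 s2 u1 u2 m j :
  (forall k, (k < m)%N -> (F N0 k u1 <= F N0 k u2)%N) ->
  out (Dk X0 N0 s1 s2 u1 u2 m) j =
  \sum_(k < m) (if ((F N0 k u1 <= j) && (j <= F N0 k u2))%N then S X0 N0 s1 s2 k else 0).
Proof.
move=> HF; rewrite /out /Dk exchange_big /=.
apply: eq_bigr => k _.
by rewrite sumrB !sum_if_eq ite_combo // HF.
Qed.

Lemma Pf_range (R : realType) (X0 : nat -> R) n a b : (a <= b.+1)%N -> (b < n)%N ->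
  Pf X0 b.+1 - Pf X0 a = \sum_(i < n) (if ((a <= i) && (i <= b))%N then X0 i else 0).
Proof.
move=> Hab Hb.
rewrite -(big_mkord xpredT (fun i : nat => if ((a <= i) && (i <= b))%N then X0 i else 0)).
rewrite (@big_cat_nat _ _ _ b.+1) //=.
rewrite [X in _ = _ + X]big1_seq ?addr0; last first.
  move=> i /andP[_]; rewrite mem_index_iota => Hi.
  by rewrite (_ : (i <= b)%N = false) ?andbF //; apply/negbTE; lia.
rewrite (@big_cat_nat _ _ _ a) //=.
rewrite [X in _ = X + _]big1_seq ?add0r; last first.
  move=> i /andP[_]; rewrite mem_index_iota => Hi.
  by rewrite (_ : (a <= i)%N = false) //; apply/negbTE; lia.
rewrite /Pf (@big_cat_nat _ _ _ a 0 b.+1) //=.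
rewrite addrC addrK.
apply: eq_big_nat => i /andP[Hi1 Hi2].
by rewrite Hi1 -ltnS Hi2.
Qed.

Lemma count_rects (R : realType) n (M : 'M[bool]_n) rs : is_rect_decomp M rs ->
  forall i j : 'I_n,
  ((M i j)%:R : R) = \sum_(k < size rs) ((in_rect (nth rect0 rs k) i j)%:R).
Proof.
move=> [_ [H1 [Hdis Hcov]]] i j.
case Mij: (M i j).
- have [k0 Hk0 Hin] := Hcov i j Mij.
  rewrite (bigD1 (Ordinal Hk0)) //= Hin big1 ?addr0 // => k Hk.
  case E: (in_rect _ i j) => //; exfalso.
  have Hne : (k : nat) != k0.
    by move: Hk; apply: contra => /eqP H; apply/eqP/val_inj.
  case: (ltngtP k k0) => Hlt.
  + by have := Hdis k k0 Hlt Hk0 i j; rewrite E Hin.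
  + by have := Hdis k0 k Hlt (ltn_ord k) i j; rewrite E Hin.
  + by rewrite Hlt eqxx in Hne.
- rewrite big1 // => k _.
  case E: (in_rect _ i j) => //.
  by rewrite (H1 k (ltn_ord k) i j E) in Mij.
Qed.

Lemma Mv_eq (R : realType) n (M : 'M[bool]_n) rs (Hd : is_rect_decomp M rs) (v : 'cV[R]_n) (j : 'I_n) :
  (mx01 R M *m v) j 0 =
  \sum_(k < size rs) (if ((ra (nth rect0 rs k) <= j) && (j <= rb (nth rect0 rs k)))%N
     then \sum_(i < n) (if ((rc (nth rect0 rs k) <= i) && (i <= rd (nth rect0 rs k)))%N
                        then v i 0 else 0) else 0).
Proof.
rewrite mxE.
under eq_bigr => i _ do rewrite mxE (count_rects R Hd) mulr_suml.
rewrite exchange_big /=; apply: eq_bigr => k _.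
rewrite /in_rect.
case: (ra _ <= j)%N; case: (j <= rb _)%N => /=; last 3 first.
- by rewrite big1 // => i _; rewrite mul0r.
- by rewrite big1 // => i _; rewrite mul0r.
- by rewrite big1 // => i _; rewrite mul0r.
apply: eq_bigr => i _.
by case: ifP; rewrite ?mul1r ?mul0r.
Qed.

Lemma vM_eq (R : realType) n (M : 'M[bool]_n) rs (Hd : is_rect_decomp M rs) (v : 'cV[R]_n) (j : 'I_n) :
  (v^T *m mx01 R M) 0 j =
  \sum_(k < size rs) (if ((rc (nth rect0 rs k) <= j) && (j <= rd (nth rect0 rs k)))%N
     then \sum_(i < n) (if ((ra (nth rect0 rs k) <= i) && (i <= rb (nth rect0 rs k)))%N
                        then v i 0 else 0) else 0).
Proof.
rewrite mxE.
under eq_bigr => i _ do rewrite !mxE (count_rects R Hd) mulr_sumr.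
rewrite exchange_big /=; apply: eq_bigr => k _.
rewrite /in_rect.
case: (rc _ <= j)%N; case: (j <= rd _)%N => /=; last 3 first.
- by rewrite big1 // => i _; rewrite !andbF mulr0.
- by rewrite big1 // => i _; rewrite !andbF mulr0.
- by rewrite big1 // => i _; rewrite !andbF mulr0.
apply: eq_bigr => i _.
by rewrite !andbT; case: ifP; rewrite ?mulr1 ?mulr0.
Qed.

Lemma run_n0 (R : realType) s1 s2 u1 u2 rs (v : 'I_0 -> R) t :
  exists c, run (prog s1 s2 u1 u2) t.+1 (init rs v) = Some c.
Proof.
have E : steps (prog s1 s2 u1 u2) 1 (init rs v) =
   Some (Cfg 99 (nat_input 0 rs) (real_input v)).
  rewrite /init; st.
  by [].
by eexists; apply: (run_of_steps E).
Qed.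

Lemma gen_correct (R : realType) s1 s2 u1 u2 n (M : 'M[bool]_n) rs (Hd : is_rect_decomp M rs)
  (v : 'cV[R]_n) (target : 'I_n -> R) :
  (s1 < 4)%N -> (s2 < 4)%N -> (u1 < 4)%N -> (u2 < 4)%N -> (0 < n)%N ->
  (forall k, (k < size rs)%N ->
     [/\ (fld (nth rect0 rs k) s1 <= n)%N, (fld (nth rect0 rs k) s2 < n)%N,
         (fld (nth rect0 rs k) s1 <= (fld (nth rect0 rs k) s2).+1)%N,
         (fld (nth rect0 rs k) u1 <= fld (nth rect0 rs k) u2)%N &
         (fld (nth rect0 rs k) u2 < n)%N]) ->
  (forall j : 'I_n, target j =
    \sum_(k < size rs) (if ((fld (nth rect0 rs k) u1 <= j) && (j <= fld (nth rect0 rs k) u2))%N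
     then \sum_(i < n) (if ((fld (nth rect0 rs k) s1 <= i) && (i <= fld (nth rect0 rs k) s2))%N
                        then v i 0 else 0) else 0)) ->
  exists c, run (prog s1 s2 u1 u2) (110 * (n + size rs) + 110)%N (init rs (fun i => v i 0)) = Some c
            /\ forall j : 'I_n, rmem c j = target j.
Proof.
move=> Hs1 Hs2 Hu1 Hu2 Hn HB HT.
set N0 := nat_input n rs.
set X0 := real_input (fun i : 'I_n => v i 0).
have HX0 : forall k, (n <= k)%N -> X0 k = 0.
  by move=> k Hk; rewrite /X0 /real_input insubN // -leqNgt.
have HXv : forall i : 'I_n, X0 i = v i 0.
  by move=> i; rewrite /X0 /real_input valK.
have H0 : N0 0%N = n by [].
have H1 : N0 1%N = size rs by [].
have HF : forall k t, (t < 4)%N -> (k < size rs)%N -> F N0 k t = fld (nth rect0 rs k) t.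
  by move=> k t Ht Hk; rewrite /F /N0 nat_input_F.
have H2 : (N0 2 < n)%N.
  rewrite /N0 nat_input2; case: ifP => // Hs.
  have [Hv _] := Hd; have := Hv 0%N Hs; rewrite /= => /and4P[? ? _ _]; lia.
have HF' : forall k, (k < size rs)%N -> [/\ (F N0 k s1 <= n)%N, (F N0 k s2 < n)%N,
                              (F N0 k u1 <= F N0 k u2)%N & (F N0 k u2 < n)%N].
  by move=> k Hk; rewrite !HF //; have [? ? ? ? ?] := HB k Hk; split.
have [c [Hrun Hout]] := @machine R s1 s2 u1 u2 N0 X0 n (size rs) Hs1 Hs2 Hu1 Hu2 Hn H0 H1 H2 HX0 HF'.
exists c; split; first exact: Hrun.
move=> j; rewrite Hout // HT out_formula; last by move=> k Hk; have [] := HF' k Hk.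
apply: eq_bigr => k _.
have [Hb1 Hb2 Hb3 Hb4 Hb5] := HB k (ltn_ord k).
rewrite !HF //.
case: ifP => // _.
rewrite /S !HF // (@Pf_range R X0 n) //.
by apply: eq_bigr => i _; rewrite HXv.
Qed.

Theorem lemma2 :
  exists (PMv PvM : program) (C : nat),
    forall (R : realType) (n : nat) (M : 'M[bool]_n) (rs : seq rect),
      is_rect_decomp M rs ->
      forall v : 'cV[R]_n,
        (exists c, run PMv (C * (n + size rs) + C)%N (init rs (fun i => v i 0)) = Some c
            /\ forall j : 'I_n, rmem c j = (mx01 R M *m v) j 0)
        /\
        (exists c, run PvM (C * (n + size rs) + C)%N (init rs (fun i => v i 0)) = Some c
            /\ forall j : 'I_n, rmem c j = (v^T *m mx01 R M) 0 j).
Proof.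
exists (prog 2 3 0 1), (prog 0 1 2 3), 110%N.
move=> R n M rs Hd v.
case: (posnP n) => [Hn0|Hn].
- subst n.
  have E : (110 * (0 + size rs) + 110 = (110 * (0 + size rs) + 109).+1)%N by lia.
  rewrite E; split.
  + have [c Hc] := run_n0 2 3 0 1 rs (fun i => v i 0) (110 * (0 + size rs) + 109).
    by exists c; split; last case.
  + have [c Hc] := run_n0 0 1 2 3 rs (fun i => v i 0) (110 * (0 + size rs) + 109).
    by exists c; split; last case.
have [Hval _] := Hd.
split.
- apply: (@gen_correct R 2 3 0 1 n M rs Hd v (fun j => (mx01 R M *m v) j 0)) => //.
  + move=> k Hk; have /and4P[? ? ? ?] := Hval k Hk; rewrite /fld; split; lia.
  + by move=> j; rewrite (Mv_eq Hd).
- apply: (@gen_correct R 0 1 2 3 n M rs Hd v (fun j => (v^T *m mx01 R M) 0 j)) => //.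
  + move=> k Hk; have /and4P[? ? ? ?] := Hval k Hk; rewrite /fld; split; lia.
  + by move=> j; rewrite (vM_eq Hd).
Qed.
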